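(* Let $G$ be a finite connected graph, $T_0$ a spanning tree of $G$, $N=|E(G-T_0)|$, with edges of $E(G-T_0)$ listed $e_1,\dots,e_N$. Then the characteristic polynomial of the mesh matrix is $$\det(X\,Id-Mesh(G,T_0))=X^N+\sum_{j=1}^N(-1)^j\,b_j\,X^{N-j},$$ where $b_j$ is the sum, over all choices of indices $1\le k_1<k_2<\dots<k_j\le N$, of the number of spanning trees of the subgraph $T_0\cup e_{k_1}\cup\dots\cup e_{k_j}$.
   Context: Orient all edges of $G$; let $\vec e_j$ go from $P_j$ to $Q_j$. Set $D(\vec e_j)=0$ if $e_j$ is a loop, and otherwise let $D(\vec e_j)$ be the 1-chain of the unique simple path in $T_0$ from $Q_j$ to $P_j$ (edges oriented along the path). Let $Z[j]=\vec e_j+D(\vec e_j)$. The mesh matrix is $Mesh(G,T_0)=(\langle Z[i],Z[j]\rangle)_{1\le i,j\le N}$, where $\langle\cdot,\cdot\rangle$ is the inner product on 1-chains with the oriented edges orthonormal. *)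

(* Defs.v *)
From mathcomp Require Import all_boot all_order all_algebra.
From mathcomp Require Import boolp.
Set Implicit Arguments. Unset Strict Implicit. Unset Printing Implicit Defensive.
Import GRing.Theory.
Local Open Scope ring_scope.

(* A finite multigraph (loops and parallel edges allowed): vertex type V,
   edge type E, each edge e oriented from [src e] (= P) to [tgt e] (= Q).
   Subgraphs are given by edge sets [F : {set E}] and always contain all
   vertices of V. *)
Section Graph.
Variables (V E : finType) (src tgt : E -> V).

Definition joins (e : E) (u w : V) : bool :=
  ((src e == u) && (tgt e == w)) || ((src e == w) && (tgt e == u)).

Fixpoint walk (F : {set E}) (u : V) (p : seq (E * V)) : bool :=
  if p is (e, w) :: q then [&& e \in F, joins e u w & walk F w q] else true.

Definition walk_end (u : V) (p : seq (E * V)) : V := last u (map snd p).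

Definition connectedP (F : {set E}) : Prop :=
  forall u w : V, exists p, walk F u p /\ walk_end u p = w.

(* a cycle in (V, F): a nonempty closed walk at u with pairwise distinct
   edges and pairwise distinct vertices (u counted once) *)
Definition is_cycle (F : {set E}) (u : V) (p : seq (E * V)) : Prop :=
  [/\ p != [::], walk F u p, walk_end u p = u,
      uniq (map fst p) & uniq (map snd p)].

Definition acyclicP (F : {set E}) : Prop := forall u p, ~ is_cycle F u p.

Definition spanning_tree_of (S T : {set E}) : Prop :=
  [/\ T \subset S, connectedP T & acyclicP T].

Definition spanning_tree (T : {set E}) : Prop := spanning_tree_of setT T.

Definition num_spanning_trees (S : {set E}) : nat :=
  #|[set T : {set E} | `[< spanning_tree_of S T >] ]|.

Definition simple_path (F : {set E}) (u w : V) (p : seq (E * V)) : Prop :=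
  [/\ walk F u p, walk_end u p = w & uniq (u :: map snd p)].

Fixpoint chain_of (u : V) (p : seq (E * V)) (t : E) : int :=
  if p is (e, w) :: q then
    (if e == t then (if (src e == u) && (tgt e == w) then 1 else -1) else 0)
    + chain_of w q t
  else 0.

Definition chain_dot (c d : E -> int) : int := \sum_(t : E) c t * d t.

(* Z[e] = e + D(e), where [path e] is the simple tree path from Q to P
   (D(e) = 0 when e is a loop) *)
Definition Zchain (path : E -> seq (E * V)) (e : E) : E -> int :=
  fun t => (t == e)%:R + (if src e == tgt e then 0 else chain_of (tgt e) (path e) t).

Definition Mesh (N : nat) (enumE : 'I_N -> E) (path : E -> seq (E * V))
  : 'M[int]_N :=
  \matrix_(i, j) chain_dot (Zchain path (enumE i)) (Zchain path (enumE j)).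

Definition bcoef (N : nat) (T0 : {set E}) (enumE : 'I_N -> E) (j : nat) : nat :=
  \sum_(K : {set 'I_N} | #|K| == j) num_spanning_trees (T0 :|: enumE @: K).

End Graph.

(* Main.v *)
Require Import Defs.
From mathcomp Require Import all_boot all_order all_algebra.
From mathcomp Require Import boolp.
From mathcomp Require Import perm.
Import GRing.Theory.
Local Open Scope ring_scope.

Lemma prod_add_sets (R : comNzRingType) (I : finType) (a b : I -> R) :
  \prod_i (a i + b i) = \sum_(P : {set I}) (\prod_(i in P) b i) * \prod_(i in ~: P) a i.
Proof.
have -> : \prod_i (a i + b i) = \prod_i \sum_(x : bool) (if x then b i else a i).
  by apply: eq_bigr => i _; rewrite big_bool addrC.
rewrite bigA_distr_bigA.
rewrite (reindex (fun P : {set I} => [ffun i => i \in P])); last first.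
  exists (fun f : {ffun I -> bool} => [set i | f i]) => x _.
    by apply/setP => i; rewrite inE ffunE.
  by apply/ffunP => i; rewrite ffunE inE.
apply: eq_bigr => P _.
rewrite (bigID (mem P)) /=; congr (_ * _).
  by apply: eq_bigr => i iP; rewrite ffunE iP.
apply: eq_big => [i|i]; first by rewrite inE.
by rewrite ffunE => /negbTE ->.
Qed.

Definition padm (R : nzRingType) n (P : {set 'I_n}) (M : 'M[R]_n) : 'M[R]_n :=
  \matrix_(i, j) if (i \in P) && (j \in P) then M i j else (i == j)%:R.
Arguments padm {R n}.

Lemma pad_prod (R : comNzRingType) n (P : {set 'I_n}) (M : 'M[R]_n) (s : 'S_n) :
  (\prod_(i in P) M i (s i)) * \prod_(i in ~: P) ((i == s i)%:R : R)
  = \prod_i padm P M i (s i).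
Proof.
rewrite (bigID (mem P) xpredT) /=.
have E2 : \prod_(i | ~~ (i \in P)) padm P M i (s i) = \prod_(i in ~: P) ((i == s i)%:R : R).
  apply: eq_big => [i|i]; first by rewrite inE.
  by rewrite mxE => /negbTE ->.
rewrite E2.
case: (boolP [forall i in ~: P, s i == i]) => [/forall_inP fix_s | ].
  congr (_ * _); apply: eq_bigr => i iP; rewrite mxE iP /=.
  case: (boolP (s i \in P)) => // siP.
  have : s (s i) == s i by apply: fix_s; rewrite inE.
  by move/eqP/perm_inj => ei; rewrite ei iP in siP.
rewrite negb_forall_in => /existsP [i /andP [iP si]].
rewrite [\prod_(j in ~: P) _](bigD1 i) //= eq_sym (negbTE si) mul0r.
by rewrite !mulr0.
Qed.

Lemma det_diag_add (R : comNzRingType) n (d : 'I_n -> R) (M : 'M[R]_n) :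
  \det (\matrix_(i, j) ((i == j)%:R * d i + M i j)) =
  \sum_(P : {set 'I_n}) (\prod_(i in ~: P) d i) * \det (padm P M).
Proof.
rewrite /determinant.
under eq_bigr => s _.
  rewrite (eq_bigr (fun i => (i == s i)%:R * d i + M i (s i))); last by move=> i _; rewrite mxE.
  rewrite prod_add_sets mulr_sumr.
  over.
rewrite exchange_big /=; apply: eq_bigr => P _.
rewrite mulr_sumr; apply: eq_bigr => s _.
rewrite -pad_prod.
rewrite big_split /=.
set A := \prod_(i in P) _.
set B := \prod_(i in ~: P) (_ == _)%:R.
set C := \prod_(i in ~: P) d i.
by rewrite [RHS]mulrC -!mulrA.
Qed.

Lemma char_poly_minors (R : comNzRingType) n (M : 'M[R]_n) :
  char_poly M = \sum_(P : {set 'I_n}) 'X^(n - #|P|) * ((-1)^+#|P| * (\det (padm P M))%:P).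
Proof.
have E : char_poly_mx M = \matrix_(i, j) ((i == j)%:R * 'X + (map_mx (fun x => - x%:P) M) i j).
  apply/matrixP => i j; rewrite !mxE mulr_natl; by case: (i == j).
rewrite /char_poly E det_diag_add; apply: eq_bigr => P _.
congr (_ * _).
  rewrite prodr_const; congr (_ ^+ _); apply/eqP; rewrite -(eqn_add2l #|P|) cardsC card_ord subnKC //.
  by have := max_card P; rewrite card_ord.
have -> : padm P (map_mx (fun x => - x%:P) M) =
   diag_mx (\row_i (if i \in P then -1 else 1)) *m map_mx polyC (padm P M).
  apply/matrixP => i j; rewrite mul_diag_mx !mxE.
  case: (boolP (i \in P)) => iP; case: (boolP (j \in P)) => jP /=; rewrite ?mulN1r ?mul1r //;
    try by case: (i == j); rewrite ?polyC1 ?polyC0 ?oppr0.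
  have /negbTE -> : i != j by apply: contraNneq jP => <-.
  by rewrite polyC0 oppr0.
rewrite det_mulmx det_diag det_map_mx; congr (_ * _).
rewrite (bigID (mem P)) /= (eq_bigr (fun _ => -1)); last by move=> i iP; rewrite mxE iP.
rewrite prodr_const big1 ?mulr1 //.
by move=> i /negbTE; rewrite mxE => ->.
Qed.

Lemma CB_half (R : comNzRingType) (S : finType) n (A B : S -> 'I_n -> R) :
  \det (\matrix_(j, k) \sum_s A s j * B s k) =
  \sum_(g : {ffun 'I_n -> S}) (\prod_j A (g j) j) * \det (\matrix_(j, k) B (g j) k).
Proof.
rewrite /determinant.
transitivity (\sum_(s : 'S_n) \sum_(g : {ffun 'I_n -> S})
   (-1)^+s * ((\prod_j A (g j) j) * \prod_j B (g j) (s j))).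
  apply: eq_bigr => s _; rewrite -mulr_sumr; congr (_ * _).
  rewrite (eq_bigr (fun j => \sum_x A x j * B x (s j))); last by move=> j _; rewrite mxE.
  rewrite bigA_distr_bigA; apply: eq_bigr => g _.
  by rewrite big_split.
rewrite exchange_big; apply: eq_bigr => g _; rewrite mulr_sumr; apply: eq_bigr => s _.
rewrite [X in _ = _ * (_ * X)](eq_bigr (fun j => B (g j) (s j))); last by move=> j _; rewrite mxE.
by rewrite mulrCA.
Qed.

Lemma CB_sym (R : comNzRingType) (S : finType) n (A B : S -> 'I_n -> R) :
  n`!%:R * \sum_(g : {ffun 'I_n -> S}) (\prod_j A (g j) j) * \det (\matrix_(j, k) B (g j) k)
  = \sum_(g : {ffun 'I_n -> S}) \det (\matrix_(j, k) A (g j) k) * \det (\matrix_(j, k) B (g j) k).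
Proof.
set T := fun g : {ffun 'I_n -> S} => (\prod_j A (g j) j) * \det (\matrix_(j, k) B (g j) k).
have Tperm : forall s : 'S_n, \sum_g T g = \sum_(g : {ffun 'I_n -> S}) T [ffun j => g (s j)].
  move=> s; apply: (reindex_inj (h := fun g : {ffun 'I_n -> S} => [ffun j => g (s j)])) => g1 g2 /ffunP e; apply/ffunP => j.
  have := e (s^-1 j)%g; rewrite !ffunE permKV => ->; by [].
rewrite -card_Sn mulr_natl -sumr_const.
transitivity (\sum_(s : 'S_n) \sum_(g : {ffun 'I_n -> S}) T [ffun j => g (s j)]).
  by apply: eq_big => // s _; apply: Tperm.
rewrite exchange_big; apply: eq_bigr => g _.
rewrite /T.
transitivity (\sum_(s : 'S_n) ((-1) ^+ s * \prod_j A (g (s j)) j) * \det (\matrix_(j, k) B (g j) k)).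
  apply: eq_bigr => s _.
  have -> : \matrix_(j, k) B ([ffun j => g (s j)] j) k = row_perm s (\matrix_(j, k) B (g j) k).
    by apply/matrixP => j k; rewrite !mxE ffunE.
  rewrite row_permE det_mulmx det_perm.
  rewrite (eq_bigr (fun j => A (g (s j)) j)); last by move=> j _; rewrite ffunE.
  by rewrite mulrCA mulrA.
rewrite -mulr_suml; congr (_ * _).
rewrite -det_tr /determinant; apply: eq_bigr => s _; congr (_ * _).
by apply: eq_bigr => j _; rewrite !mxE.
Qed.

Lemma det0_rker (R : idomainType) n (A : 'M[R]_n) (x : 'I_n -> R) i0 :
  x i0 != 0 -> (forall j, \sum_k A j k * x k = 0) -> \det A = 0.
Proof.
move=> xi0 Ax.
pose X : 'cV[R]_n := \col_k x k.
have AX : A *m X = 0.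
  apply/matrixP => j k; rewrite !mxE -[RHS](Ax j); apply: eq_bigr => l _; by rewrite mxE.
have : (\det A)%:M *m X = 0 by rewrite -mul_adj_mx -mulmxA AX mulmx0.
rewrite mul_scalar_mx => /matrixP /(_ i0 0); rewrite !mxE => /eqP.
by rewrite mulf_eq0 (negbTE xi0) orbF => /eqP.
Qed.

Lemma det0_lker (R : idomainType) n (A : 'M[R]_n) (z : 'I_n -> R) i0 :
  z i0 != 0 -> (forall k, \sum_j z j * A j k = 0) -> \det A = 0.
Proof.
move=> zi0 zA; rewrite -det_tr; apply: (@det0_rker _ _ _ z i0 zi0) => k.
by rewrite -[RHS](zA k); apply: eq_bigr => j _; rewrite mxE mulrC.
Qed.

Lemma det_sq1 n (A Q : 'M[int]_n) : A *m Q = 1%:M -> \det A ^+ 2 = 1.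
Proof.
move=> AQ; have : \det Q * \det A = 1 by rewrite mulrC -det_mulmx AQ det1.
move/intUnitRing.unitzPl; rewrite qualifE => /orP [] /eqP ->; by [].
Qed.

Set Implicit Arguments. Unset Strict Implicit.

Section G.
Variables (V E : finType) (src tgt : E -> V).
Implicit Types (F : {set E}) (u w x v : V) (p q : seq (E * V)) (e t f : E).

Definition Dm (v : V) (e : E) : int := (tgt e == v)%:R - (src e == v)%:R.

Lemma walk_cat F u p q :
  walk src tgt F u (p ++ q) = walk src tgt F u p && walk src tgt F (walk_end u p) q.
Proof.
elim: p u => [|[e w] p IH] u //=.
by rewrite IH /walk_end /= !andbA.
Qed.

Lemma walk_end_cat (u : V) (p q : seq (E * V)) : walk_end (walk_end u p) q = walk_end u (p ++ q).
Proof. by rewrite /walk_end map_cat last_cat. Qed.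

Lemma walk_end_cons (u : V) (e : E) w p : walk_end u ((e, w) :: p) = walk_end w p.
Proof. by []. Qed.

Lemma walk_sub F F' u p : F \subset F' -> walk src tgt F u p -> walk src tgt F' u p.
Proof.
move=> sFF'; elim: p u => [|[e w] p IH] u //= /and3P [eF j wp].
by rewrite (subsetP sFF' _ eF) j IH.
Qed.

Lemma walk_edges F u p e : walk src tgt F u p -> e \in map fst p -> e \in F.
Proof.
elim: p u => [|[f w] p IH] u //= /and3P [fF _ wp].
rewrite inE => /orP [/eqP -> // | ep]; exact: IH wp ep.
Qed.

Lemma chain_notin u p t : t \notin map fst p -> chain_of src tgt u p t = 0.
Proof.
elim: p u => [|[f w] p IH] u //=.
rewrite inE negb_or => /andP [tf tp]; rewrite IH // addr0.
by rewrite eq_sym (negbTE tf).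
Qed.

Lemma joins_sign e u w v : joins src tgt e u w ->
  Dm v e * (if (src e == u) && (tgt e == w) then 1 else -1) = (w == v)%:R - (u == v)%:R.
Proof.
rewrite /joins /Dm => /orP [/andP [/eqP su /eqP tw] | /andP [/eqP sw /eqP tu]].
  by rewrite su tw !eqxx mulr1.
rewrite sw tu; case: (eqVneq w u) => [-> | ne] /=; first by rewrite mulr1.
by rewrite mulrN1 opprB.
Qed.

Lemma chain_D F u p v : walk src tgt F u p ->
  \sum_e Dm v e * chain_of src tgt u p e = (walk_end u p == v)%:R - (u == v)%:R.
Proof.
elim: p u => [|[e w] p IH] u /=.
  by move=> _; rewrite big1 ?subrr // => e _; rewrite mulr0.
move=> /and3P [eF j wp].
under eq_bigr => t _ do rewrite mulrDr.
rewrite big_split /= IH // walk_end_cons.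
rewrite (bigD1 e) //= eqxx big1 ?addr0; last first.
  by move=> t /negbTE te; rewrite eq_sym te mulr0.
rewrite joins_sign //.
by rewrite addrC addrA subrK.
Qed.


Lemma joins_end e y x : joins src tgt e y x -> (x == src e) || (x == tgt e).
Proof. by rewrite /joins => /orP [] /andP [/eqP -> /eqP ->]; rewrite eqxx ?orbT. Qed.

Lemma joins_ends e u w : joins src tgt e u w -> forall x, ((x == src e) || (x == tgt e)) = ((x == u) || (x == w)).
Proof.
by rewrite /joins => /orP [] /andP [/eqP -> /eqP ->] x //; rewrite orbC.
Qed.

Lemma step_mem F w q e : walk src tgt F w q -> e \in map fst q ->
  exists2 x, x \in map snd q & (x == src e) || (x == tgt e).
Proof.
elim: q w => [|[f x] q IH] w //= /and3P [fF j wq].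
rewrite inE => /orP [/eqP -> | eq].
  by exists x; [rewrite inE eqxx | exact: joins_end j].
by have [y yq ye] := IH _ wq eq; exists y => //; rewrite inE yq orbT.
Qed.

Lemma uniq_edges F u p : walk src tgt F u p -> uniq (u :: map snd p) -> uniq (map fst p).
Proof.
elim: p u => [|[e w] p IH] u //= /and3P [eF j wp].
rewrite inE negb_or => /andP [/andP [uw up] /andP [wp' up']].
rewrite (IH w) ?andbT //=; last by rewrite wp' up'.
apply/negP => ep; have [x xp xe] := step_mem wp ep.
move: xe; rewrite (joins_ends j) => /orP [] /eqP ex; rewrite ex in xp.
  by rewrite xp in up.
by rewrite xp in wp'.
Qed.

Lemma shorten F u p : walk src tgt F u p ->
  exists q, [/\ walk src tgt F u q, walk_end u q = walk_end u p & uniq (u :: map snd q)].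
Proof.
elim: p u => [|[e w] p IH] u /=.
  by move=> _; exists [::].
move=> /and3P [eF j wp]; have [q' [wq' eq' uq']] := IH _ wp.
case: (boolP (u \in w :: map snd q')) => uin; last first.
  exists ((e, w) :: q'); split => //=; first by rewrite eF j wq'.
  by rewrite uin.
move: uin; rewrite inE => /orP [/eqP uw | uq].
  by exists q'; rewrite uw; split.
have [[e' u'] inq /= uu'] := mapP uq.
case/splitPr: inq wq' eq' uq' => q1 q2.
rewrite -uu' => wq eqe uqq.
exists q2; split.
- move: wq; rewrite -cat_rcons walk_cat => /andP [w1 w2].
  by move: w2; rewrite /walk_end map_rcons last_rcons.
- by rewrite walk_end_cons -eqe -cat_rcons -walk_end_cat /walk_end map_rcons last_rcons.
- move: uqq; rewrite map_cat -cat_cons cat_uniq => /and3P [_ _] /=; done.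
Qed.

Definition reach F u : {set V} :=
  [set w | `[< exists p, walk src tgt F u p /\ walk_end u p = w >] ].

Lemma reach_refl F u : u \in reach F u.
Proof. by rewrite inE; apply/asboolP; exists [::]. Qed.

Lemma reach_step F u w e x : w \in reach F u -> e \in F -> joins src tgt e w x -> x \in reach F u.
Proof.
rewrite !inE => /asboolP [p [wp ep]] eF j; apply/asboolP.
exists (p ++ [:: (e, x)]); split.
  by rewrite walk_cat wp ep /= eF j.
by rewrite -walk_end_cat.
Qed.

Lemma reach_closed F u e : e \in F -> (src e \in reach F u) = (tgt e \in reach F u).
Proof.
move=> eF; apply/idP/idP => h.
  by apply: (reach_step h eF); rewrite /joins !eqxx.
by apply: (reach_step h eF); rewrite /joins !eqxx orbT.
Qed.

Lemma crossing F (R : {set V}) x p : walk src tgt F x p -> x \in R -> walk_end x p \notin R ->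
  exists2 e, e \in F & (src e \in R) != (tgt e \in R).
Proof.
elim: p x => [|[e w] p IH] x /=; first by move=> _ ->.
move=> /and3P [eF j wp] xR; rewrite walk_end_cons => wR.
case: (boolP (w \in R)) => wR'; first exact: IH wp wR' wR.
exists e => //; move: j; rewrite /joins => /orP [] /andP [/eqP -> /eqP ->].
  by rewrite xR (negbTE wR').
by rewrite xR (negbTE wR').
Qed.

Lemma sumD_R (R : {set V}) e : \sum_(v in R) Dm v e = (tgt e \in R)%:R - (src e \in R)%:R.
Proof.
rewrite /Dm sumrB; congr (_ - _).
  rewrite (big_mkcond (fun v => v \in R)) /= (bigD1 (tgt e)) //= eqxx big1 ?addr0.
    by case: (tgt e \in R).
  by move=> v /negbTE; rewrite eq_sym => ->; case: (v \in R).
rewrite (big_mkcond (fun v => v \in R)) /= (bigD1 (src e)) //= eqxx big1 ?addr0.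
  by case: (src e \in R).
by move=> v /negbTE; rewrite eq_sym => ->; case: (v \in R).
Qed.

Lemma acyclic_ker F (y : E -> int) : acyclicP src tgt F ->
  (forall v, \sum_e Dm v e * y e = 0) -> (forall e, e \notin F -> y e = 0) ->
  forall e, y e = 0.
Proof.
move=> ac Dy yF f; apply/eqP; apply/negPn/negP => yf.
have fF : f \in F by apply: contraNT yf => fF; rewrite yF.
pose F' := F :\ f; pose R := reach F' (tgt f).
have aR : src f \notin R.
  apply/negP; rewrite inE => /asboolP [p [wp ep]].
  have [q [wq eq uq]] := shorten wp.
  apply: (ac (src f) ((f, tgt f) :: q)); split => //=.
  - rewrite fF /joins !eqxx /=; apply: walk_sub wq; exact: subD1set.
  - by rewrite walk_end_cons eq.
  - rewrite (uniq_edges wq uq) andbT; apply/negP => fq.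
    by have := walk_edges wq fq; rewrite !inE eqxx.
have : \sum_(v in R) \sum_e Dm v e * y e = 0 by rewrite big1.
rewrite exchange_big /=.
rewrite (bigD1 f) //= [X in _ + X]big1 ?addr0.
  rewrite -mulr_suml sumD_R (negbTE aR) reach_refl subr0 mul1r => /eqP.
  by rewrite (negbTE yf).
move=> e ef; rewrite -mulr_suml sumD_R.
case: (boolP (e \in F)) => eF; last by rewrite yF // mulr0.
have eF' : e \in F' by rewrite !inE ef.
by rewrite (reach_closed _ eF') subrr mul0r.
Qed.

Lemma cycle_chain F u p : is_cycle src tgt F u p ->
  [/\ forall v, \sum_e Dm v e * chain_of src tgt u p e = 0,
      forall e, e \notin F -> chain_of src tgt u p e = 0 &
      exists e, chain_of src tgt u p e != 0].
Proof.
case=> pn wp ep ue uv; split.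
- by move=> v; rewrite (chain_D v wp) ep subrr.
- by move=> e eF; apply: chain_notin; apply: contra eF; exact: walk_edges wp.
case: p pn wp ep ue uv => [//|[f w] q] _ /= /and3P [fF j wq] _ /andP [fq _] _.
exists f; rewrite eqxx (chain_notin _ fq) addr0.
by case: ifP.
Qed.

End G.

Import Num.Theory.

Section Core.
Variables (V E : finType) (src tgt : E -> V) (T0 : {set E}) (N : nat)
  (eK : 'I_N -> E) (path : E -> seq (E * V)).
Hypotheses (T0tree : spanning_tree src tgt T0) (eKinj : injective eK)
  (eKcov : forall e : E, e \notin T0 <-> exists i : 'I_N, eK i = e)
  (Hpath : forall i : 'I_N, src (eK i) != tgt (eK i) ->
     simple_path src tgt T0 (tgt (eK i)) (src (eK i)) (path (eK i))).

Implicit Types (F : {set E}) (u w x v : V) (p q : seq (E * V)) (e t f s : E) (k : 'I_N).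

Definition Z e k : int := Zchain src tgt path (eK k) e.
Notation D := (Dm src tgt).

Lemma T0acyc : acyclicP src tgt T0.
Proof. by case: T0tree. Qed.
Lemma T0conn : connectedP src tgt T0.
Proof. by case: T0tree. Qed.

Lemma eK_notT0 k : eK k \notin T0.
Proof. by apply/(eKcov (eK k)); exists k. Qed.

Lemma Z_ker k v : \sum_e D v e * Z e k = 0.
Proof.
rewrite /Z /Zchain.
under eq_bigr => e _ do rewrite mulrDr.
rewrite big_split /= (bigD1 (eK k)) //= eqxx mulr1 big1 ?addr0; last first.
  by move=> e /negbTE ->; rewrite mulr0.
case: (boolP (src (eK k) == tgt (eK k))) => [loop | nloop].
  rewrite big1 ?addr0; first by rewrite /Dm (eqP loop) subrr.
  by move=> e _; rewrite mulr0.
have [wp ep _] := Hpath nloop.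
by rewrite (chain_D v wp) ep /Dm addrC addrA subrK subrr.
Qed.

Lemma Z_out e k : e \notin T0 -> e != eK k -> Z e k = 0.
Proof.
move=> eT ek; rewrite /Z /Zchain (negbTE ek) add0r.
case: ifP => // nloop; have [wp _ _] := Hpath (negbT nloop).
by apply: chain_notin; apply: contra eT; exact: walk_edges wp.
Qed.

Lemma Z_nt m k : Z (eK m) k = (m == k)%:R.
Proof.
rewrite /Z /Zchain (inj_eq eKinj).
case: ifP => [_|nloop]; first by rewrite addr0.
have [wp _ _] := Hpath (negbT nloop).
rewrite chain_notin ?addr0 //; apply: contra (eK_notT0 m); exact: walk_edges wp.
Qed.

Variable K : {set 'I_N}.
Definition S0 := T0 :|: eK @: K.

Lemma Z_outS e k : e \notin S0 -> k \in K -> Z e k = 0.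
Proof.
rewrite !inE negb_or => /andP [eT eK'] kK; apply: Z_out => //.
by apply: contraNneq eK' => ->; rewrite mem_imset.
Qed.

Lemma repr (y : E -> int) : (forall v, \sum_e D v e * y e = 0) ->
  (forall e, e \notin S0 -> y e = 0) ->
  forall e, y e = \sum_(k in K) Z e k * y (eK k).
Proof.
move=> Dy yS e; apply/eqP; rewrite -subr_eq0; apply/eqP; move: e.
apply: (acyclic_ker T0acyc).
  move=> v; under eq_bigr => e _ do rewrite mulrBr mulr_sumr.
  rewrite sumrB Dy exchange_big /= big1 ?subrr // => k _.
  under eq_bigr => e _ do rewrite mulrA.
  by rewrite -mulr_suml Z_ker mul0r.
move=> e eT; have [m em] := (eKcov e).1 eT; rewrite -em.
under eq_bigr => k _ do rewrite Z_nt.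
case: (boolP (m \in K)) => mK.
  rewrite (bigD1 m) //= eqxx mul1r big1 ?addr0 ?subrr //.
  by move=> k /andP [_ /negbTE]; rewrite eq_sym => ->; rewrite mul0r.
rewrite big1 ?subr0.
  apply: yS; rewrite !inE negb_or eK_notT0 /=.
  by apply/imsetP => [[k kK /eKinj ek]]; rewrite ek kK in mK.
move=> k kK; have /negbTE -> : m != k by apply: contraNneq mK => ->.
by rewrite mul0r.
Qed.



Lemma fund_cycles F : connectedP src tgt F ->
  exists C : E -> E -> int, forall s,
    (forall v, \sum_e D v e * C s e = 0) /\ (forall e, e \notin F -> C s e = (e == s)%:R).
Proof.
move=> Fc.
suff h : forall s, exists c : E -> int,
  (forall v, \sum_e D v e * c e = 0) /\ (forall e, e \notin F -> c e = (e == s)%:R).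
  by have [f Hf] := choice h; exists f.
move=> s.
have [p [wp ep]] := Fc (tgt s) (src s).
exists (fun e => (e == s)%:R + chain_of src tgt (tgt s) p e); split.
  move=> v; under eq_bigr => e _ do rewrite mulrDr.
  rewrite big_split /= (chain_D v wp) ep (bigD1 s) //= eqxx mulr1 big1 ?addr0.
    by rewrite /Dm addrC addrA subrK subrr.
  by move=> e /negbTE ->; rewrite mulr0.
move=> e eF; rewrite chain_notin ?addr0 //.
by apply: contra eF; exact: walk_edges wp.
Qed.

Lemma tree_card T : spanning_tree_of src tgt S0 T -> #|S0 :\: T| = #|K|.
Proof.
case=> TS Tc Ta.
have [C HC] := fund_cycles Tc.
pose S := S0 :\: T.
have CS : forall s, s \in S -> forall e, C s e = \sum_(k in K) Z e k * C s (eK k).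
  move=> s sS; apply: repr; first by move=> v; case: (HC s).
  move=> e eS; have eT : e \notin T by apply: contra eS; exact: (subsetP TS).
  rewrite (HC s).2 //; case: eqP => // es; rewrite es in eS.
  by move: sS; rewrite inE (negbTE eS) andbF.
have Css : forall s, s \in S -> C s s = 1.
  by move=> s; rewrite inE => /andP [sT _]; rewrite (HC s).2 // eqxx.
have key : forall k, k \in K -> \sum_(s in S) Z s k * C s (eK k) = 1.
  move=> k kK.
  pose y := fun e => Z e k - \sum_(s in S) Z s k * C s e.
  have y0 : forall e, y e = 0.
    apply: (acyclic_ker Ta).
      move=> v; under eq_bigr => e _ do rewrite mulrBr mulr_sumr.
      rewrite sumrB Z_ker exchange_big /= big1 ?subrr // => s _.
      under eq_bigr => e _ do rewrite mulrCA.
      by rewrite -mulr_sumr (HC s).1 mulr0.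
    move=> e eT; rewrite /y.
    under eq_bigr => s sS do rewrite (HC s).2 //.
    case: (boolP (e \in S)) => eS.
      rewrite (bigD1 e) //= eqxx mulr1 big1 ?addr0 ?subrr //.
      by move=> s /andP [_ /negbTE]; rewrite eq_sym => ->; rewrite mulr0.
    have eS0 : e \notin S0 by move: eS; rewrite inE eT.
    rewrite Z_outS // big1 ?subrr // => s sS.
    have /negbTE -> : e != s by apply: contraNneq eS => ->.
    by rewrite mulr0.
  have := y0 (eK k); rewrite /y Z_nt eqxx => /eqP; rewrite subr_eq0 => /eqP <-.
  by [].
have : (#|S|%:R : int) = #|K|%:R.
  rewrite -!sumr_const.
  transitivity (\sum_(s in S) \sum_(k in K) Z s k * C s (eK k)).
    by apply: eq_bigr => s sS; rewrite -CS // Css.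
  rewrite exchange_big /=; apply: eq_bigr => k kK; exact: key.
by move/eqP; rewrite eqr_nat => /eqP.
Qed.


Implicit Types (g : {ffun 'I_N -> (E + 'I_N)%type}) (j : 'I_N).
Definition W (sg : (E + 'I_N)%type) k : int :=
  match sg with
  | inl e => if k \in K then Z e k else 0
  | inr i => if k \in K then 0 else (i == k)%:R
  end.
Definition Wg (g : {ffun 'I_N -> (E + 'I_N)%type}) : 'M[int]_N := \matrix_(j, k) W (g j) k.
Definition img (g : {ffun 'I_N -> (E + 'I_N)%type}) : {set (E + 'I_N)%type} := g @: [set: 'I_N].
Definition Sg g : {set E} := [set s | inl s \in img g].
Definition ITset (T : {set E}) : {set (E + 'I_N)%type} := inl @: (S0 :\: T) :|: inr @: ~: K.

Lemma img_in g j : g j \in img g.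
Proof. by apply: imset_f; rewrite inE. Qed.

Lemma Wg_det1 g : injective g -> (forall j i, g j = inr i -> i \notin K) ->
  (forall j s, g j = inl s -> s \in S0) -> spanning_tree_of src tgt S0 (S0 :\: Sg g) ->
  \det (Wg g) ^+ 2 = 1.
Proof.
move=> ginj gi gs [_ Fc Fa].
have [C HC] := fund_cycles Fc.
have CS : forall s, s \in S0 -> s \in Sg g -> forall e, C s e = \sum_(k in K) Z e k * C s (eK k).
  move=> s sS0 sSg; apply: repr; first by move=> v; case: (HC s).
  move=> e eS; rewrite (HC s).2; last by rewrite inE negb_and eS orbT.
  by case: eqP => // es; rewrite es sS0 in eS.
pose Q : 'M[int]_N := \matrix_(k, j)
  match g j with inl s => if k \in K then C s (eK k) else 0 | inr i => (i == k)%:R end.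
apply: (@det_sq1 _ _ Q); apply/matrixP => j' j; rewrite !mxE.
under eq_bigr => k _ do rewrite !mxE.
have ejj : (j' == j) = (g j' == g j) by rewrite (inj_eq ginj).
rewrite ejj.
case E1: (g j') => [s'|i']; case E2: (g j) => [s|i] /=.
- have sS0 : s \in S0 by exact: gs E2.
  have sSg : s \in Sg g by rewrite inE -E2 img_in.
  have s'Sg : s' \in Sg g by rewrite inE -E1 img_in.
  rewrite (eq_bigr (fun k => if k \in K then Z s' k * C s (eK k) else 0)); last by move=> k _; case: ifP; rewrite ?mul0r.
  rewrite -big_mkcond /= -CS // (HC s).2; last by rewrite inE s'Sg.
  by [].
- have iK := gi _ _ E2.
  rewrite big1 // => k _; case: ifP => kK //; last by rewrite mul0r.
  have /negbTE -> : i != k by apply: contraNneq iK => ->.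
  by rewrite mulr0.
- by rewrite big1 // => k _; case: ifP => _; rewrite ?mul0r ?mulr0.
- have i'K := gi _ _ E1.
  rewrite (bigD1 i') //= (negbTE i'K) eqxx mul1r big1 ?addr0.
    by rewrite eq_sym.
  move=> k /negbTE ki'; case: ifP => _; first by rewrite mul0r.
  by rewrite eq_sym ki' mul0r.
Qed.


Lemma sum_ifK (a b : 'I_N -> int) :
  \sum_k (if k \in K then a k else 0) * b k = \sum_(k in K) a k * b k.
Proof.
rewrite [RHS]big_mkcond /=; apply: eq_bigr => k _; by case: ifP; rewrite ?mul0r.
Qed.

Lemma sum_if2 (a b : 'I_N -> int) :
  \sum_k (if k \in K then a k else 0) * (if k \in K then b k else 0) = \sum_(k in K) a k * b k.
Proof.
rewrite [RHS]big_mkcond /=; apply: eq_bigr => k _; by case: ifP; rewrite ?mul0r.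
Qed.

Lemma det0_c1 g j i : g j = inr i -> i \in K -> \det (Wg g) = 0.
Proof.
move=> gj iK; apply: (@det0_lker _ _ _ (fun j' => (j' == j)%:R) j); first by rewrite eqxx.
move=> k; rewrite (bigD1 j) //= eqxx mul1r big1 ?addr0.
  rewrite mxE gj /=; case: ifP => // kK.
  by have /negbTE -> : i != k by apply: contraTneq iK => ->; rewrite kK.
by move=> j' /negbTE ->; rewrite mul0r.
Qed.

Lemma det0_c2 g j s : g j = inl s -> s \notin S0 -> \det (Wg g) = 0.
Proof.
move=> gj sS; apply: (@det0_lker _ _ _ (fun j' => (j' == j)%:R) j); first by rewrite eqxx.
move=> k; rewrite (bigD1 j) //= eqxx mul1r big1 ?addr0.
  by rewrite mxE gj /=; case: ifP => // kK; rewrite Z_outS.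
by move=> j' /negbTE ->; rewrite mul0r.
Qed.

Lemma det0_c3 g i : i \notin K -> inr i \notin img g -> \det (Wg g) = 0.
Proof.
move=> iK ig; apply: (@det0_rker _ _ _ (fun k => (k == i)%:R) i); first by rewrite eqxx.
move=> j; rewrite (bigD1 i) //= eqxx mulr1 big1 ?addr0.
  rewrite mxE; case E1: (g j) => [s|i'] /=; first by rewrite (negbTE iK).
  rewrite (negbTE iK); case: eqP => // ei; rewrite -ei -E1 in ig.
  by rewrite img_in in ig.
by move=> k /negbTE ->; rewrite mulr0.
Qed.

Lemma det0_c4 g : ~ acyclicP src tgt (S0 :\: Sg g) -> \det (Wg g) = 0.
Proof.
move=> nac.
have [u [p cyc]] : exists u p, is_cycle src tgt (S0 :\: Sg g) u p.
  case: (pselect (exists u p, is_cycle src tgt (S0 :\: Sg g) u p)) => // h.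
  by exfalso; apply: nac => u p cyc; apply: h; exists u, p.
have [Dy yF [e0 ye0]] := cycle_chain cyc.
set y := chain_of src tgt u p in Dy yF ye0.
have ry : forall e, y e = \sum_(k in K) Z e k * y (eK k).
  apply: repr => // e eS; apply: yF; by rewrite inE negb_and eS orbT.
have [k0 k0K yk0] : exists2 k0, k0 \in K & y (eK k0) != 0.
  case: (pselect (exists2 k0, k0 \in K & y (eK k0) != 0)) => // h.
  exfalso; move/eqP: ye0; apply; rewrite ry big1 // => k kK.
  case: (eqVneq (y (eK k)) 0) => [-> | nz]; first by rewrite mulr0.
  by exfalso; apply: h; exists k.
apply: (@det0_rker _ _ _ (fun k => if k \in K then y (eK k) else 0) k0); first by rewrite k0K.
move=> j; under eq_bigr => k _ do rewrite mxE.
case E1: (g j) => [s|i] /=.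
  rewrite sum_if2 -ry; apply: yF; rewrite inE negb_and; apply/orP; left.
  by rewrite negbK inE -E1 img_in.
by rewrite big1 // => k _; case: ifP => _; rewrite ?mul0r ?mulr0.
Qed.


Lemma det0_c5 g : injective g -> ~ connectedP src tgt (S0 :\: Sg g) -> \det (Wg g) = 0.
Proof.
move=> ginj nc; set F := S0 :\: Sg g.
have [u [w wR]] : exists u w, w \notin reach src tgt F u.
  case: (pselect (exists u w, w \notin reach src tgt F u)) => // h.
  exfalso; apply: nc => u w.
  case: (boolP (w \in reach src tgt F u)) => [|wR]; first by rewrite inE => /asboolP.
  by exfalso; apply: h; exists u, w.
set R := reach src tgt F u in wR.
have [p [wp ep]] := T0conn u w.
have [e0 e0T cr] := crossing wp (reach_refl _ _ _ u) (eq_ind_r (fun x => x \notin R) wR ep).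
pose c e : int := (tgt e \in R)%:R - (src e \in R)%:R.
have cF : forall e, e \in F -> c e = 0 by move=> e eF; rewrite /c (reach_closed src tgt u eF) subrr.
have ce0 : c e0 != 0.
  by move: cr; rewrite /c; case: (src e0 \in R); case: (tgt e0 \in R).
have e0S : e0 \in Sg g.
  have : e0 \notin F by apply: contra ce0 => /cF ->.
  by rewrite inE negb_and negbK /S0 !inE e0T /= orbF.
have [j0 _ gj0] : exists2 j0, j0 \in [set: 'I_N] & inl e0 = g j0.
  by apply/imsetP; move: e0S; rewrite inE.
pose z j := match g j with inl s => c s | inr _ => 0 end.
apply: (@det0_lker _ _ _ z j0); first by rewrite /z -gj0.
move=> k.
pose h (sg : (E + 'I_N)%type) := match sg with inl s => c s * W (inl s) k | inr _ => 0 end.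
transitivity (\sum_(j in [set: 'I_N]) h (g j)).
  apply: eq_big => [j|j _]; first by rewrite inE.
  by rewrite mxE /z /h; case: (g j) => //= i; rewrite mul0r.
rewrite -big_imset /=; last by move=> j1 j2 _ _; apply: ginj.
rewrite -/(img g) big_mkcond big_sumType /= [X in _ + X]big1 ?addr0; last by move=> i _; case: ifP.
rewrite -big_mkcond /=.
case: (boolP (k \in K)) => kK /=; last by rewrite big1 // => s _; rewrite mulr0.

transitivity (\sum_e c e * Z e k).
  rewrite [RHS](bigID (fun e => inl e \in img g)) /= [X in _ = _ + X]big1 ?addr0 //.
  move=> e eS; case: (boolP (e \in S0)) => eS0.
    by rewrite cF ?mul0r // inE eS0 inE eS.
  by rewrite Z_outS // mulr0.
under eq_bigr => e _ do rewrite /c -sumD_R mulr_suml.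
by rewrite exchange_big /= big1 // => v _; apply: Z_ker.
Qed.


Definition trees := [set T : {set E} | `[< spanning_tree_of src tgt S0 T >] ].

Lemma inl_inj' : injective (@inl E 'I_N).
Proof. by move=> a b []. Qed.
Lemma inr_inj' : injective (@inr E 'I_N).
Proof. by move=> a b []. Qed.

Lemma inl_inr_false (A : {set 'I_N}) s : (inl s \in inr @: A) = false.
Proof. by apply/imsetP => [[i _]]. Qed.
Lemma inr_inl_false (A : {set E}) (i : 'I_N) : (inr i \in inl @: A) = false.
Proof. by apply/imsetP => [[s _]]. Qed.

Lemma inl_IT T s : (inl s \in ITset T) = (s \in S0 :\: T).
Proof. by rewrite !inE inl_inr_false orbF (mem_imset _ _ inl_inj') !inE. Qed.

Lemma inr_IT T i : (inr i \in ITset T) = (i \notin K).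
Proof. by rewrite !inE inr_inl_false (mem_imset _ _ inr_inj') !inE. Qed.

Lemma IT_card T : T \in trees -> #|ITset T| = N.
Proof.
rewrite inE => /asboolP Tt.
rewrite cardsU.
have -> : inl @: (S0 :\: T) :&: inr @: (~: K) = set0.
  apply/setP => x; rewrite !inE; apply/negP => /andP [/imsetP [a _ ->] /imsetP [b _]] //.
rewrite cards0 subn0 !card_imset; [|exact: inr_inj'|exact: inl_inj'].
rewrite (tree_card Tt); have := cardsC K; rewrite card_ord => h; by rewrite h.
Qed.

Lemma IT_inj g T : T \in trees -> img g = ITset T -> injective g.
Proof.
move=> Tt e; have := IT_card Tt; rewrite -e => c.
have /imset_injP gi : #|g @: [set: 'I_N]| == #|[set: 'I_N]| by rewrite -/(img g) c cardsT card_ord.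
by move=> a b; apply: gi; rewrite inE.
Qed.

Lemma IT_uniq T1 T2 : T1 \in trees -> T2 \in trees -> ITset T1 = ITset T2 -> T1 = T2.
Proof.
rewrite !inE => /asboolP [T1S _ _] /asboolP [T2S _ _] e.
apply/setP => s; have h1 := inl_IT T1 s; rewrite e inl_IT !in_setD in h1.
case: (boolP (s \in S0)) => sS0; last first.
  by rewrite (contraNF (subsetP T1S s)) // (contraNF (subsetP T2S s)).
by move: h1; rewrite sS0 !andbT => /negb_inj ->.
Qed.

Lemma img_IT g : (forall j i, g j = inr i -> i \notin K) -> (forall j s, g j = inl s -> s \in S0) ->
  (forall i, i \notin K -> inr i \in img g) -> img g = ITset (S0 :\: Sg g).
Proof.
move=> c1 c2 c3; apply/setP => [[s|i]].
  rewrite inl_IT !in_setD negb_and negbK (_ : (s \in Sg g) = (inl s \in img g)); last by rewrite inE.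
  case: (boolP (inl s \in img g)) => sg /=; last by rewrite andNb.
  have [j _ gj] := imsetP sg.
  by rewrite (c2 j s (esym gj)).
rewrite inr_IT; apply/idP/idP => [ig | /c3 //].
by have [j _ gj] := imsetP ig; apply: (c1 j); rewrite gj.
Qed.

Lemma IT_caseA g T : T \in trees -> img g = ITset T ->
  [/\ (forall j i, g j = inr i -> i \notin K), (forall j s, g j = inl s -> s \in S0),
      (forall i, i \notin K -> inr i \in img g) & S0 :\: Sg g = T].
Proof.
move=> Tt e; split.
- by move=> j i gj; rewrite -(inr_IT T) -e -gj img_in.
- by move=> j s gj; have := img_in g j; rewrite gj e inl_IT inE => /andP [].
- by move=> i iK; rewrite e inr_IT.
move: Tt; rewrite inE => /asboolP [TS _ _].
apply/setP => s; rewrite !in_setD (_ : (s \in Sg g) = (inl s \in img g)); last by rewrite inE.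
rewrite e inl_IT !in_setD negb_and negbK.
case: (boolP (s \in T)) => sT /=; first by rewrite (subsetP TS s sT).
by rewrite andNb.
Qed.

Lemma det_sq g : \det (Wg g) ^+ 2 = \sum_(T in trees) (img g == ITset T)%:R.
Proof.
case: (boolP [exists T in trees, img g == ITset T]).
  case/exists_inP => T Tt /eqP e.
  rewrite (bigD1 T) //= e eqxx big1 ?addr0.
    have ginj := IT_inj Tt e.
    have [c1 c2 c3 eT] := IT_caseA Tt e.
    apply: Wg_det1 => //; rewrite eT; by move: Tt; rewrite inE => /asboolP.
  move=> T' /andP [T't T'T]; case: eqP => // e'.
  by rewrite (IT_uniq Tt T't e') eqxx in T'T.
move=> nex; rewrite big1; last first.
  move=> T Tt; case: eqP => // e; exfalso; move/negP: nex; apply.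
  by apply/exists_inP; exists T => //; apply/eqP.
case: (boolP (injectiveb g)) => [/injectiveP ginj | /injectivePn [j1 [j2 ne e]]]; last first.
  rewrite (determinant_alternate ne) ?expr0n //.
  by move=> k; rewrite !mxE e.
have d0 : \det (Wg g) = 0; last by rewrite d0 expr0n.
case: (pselect (exists j i, g j = inr i /\ i \in K)) => [[j [i [gj iK]]] | n1].
  exact: det0_c1 gj iK.
case: (pselect (exists j s, g j = inl s /\ s \notin S0)) => [[j [s [gj sS]]] | n2].
  exact: det0_c2 gj sS.
case: (pselect (exists i, i \notin K /\ inr i \notin img g)) => [[i [iK ig]] | n3].
  exact: det0_c3 iK ig.
case: (pselect (acyclicP src tgt (S0 :\: Sg g))) => ac; last exact: det0_c4.
case: (pselect (connectedP src tgt (S0 :\: Sg g))) => co; last exact: det0_c5.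
exfalso; move/negP: nex; apply; apply/exists_inP; exists (S0 :\: Sg g).
  by rewrite inE; apply/asboolP; split => //; exact: subsetDl.
apply/eqP; apply: img_IT.
- move=> j i gj; apply/negP => iK; apply: n1; by exists j, i.
- move=> j s gj; apply/negPn/negP => sS; apply: n2; by exists j, s.
- move=> i iK; apply/negPn/negP => ig; apply: n3; by exists i.
Qed.


Lemma card_img_eq (I : {set (E + 'I_N)%type}) : #|I| = N ->
  #|[set g : {ffun 'I_N -> (E + 'I_N)%type} | img g == I]| = N`!.
Proof.
move=> cI.
transitivity (#|[set f : {ffun 'I_N -> (E + 'I_N)%type} in ffun_on (fun z : (E + 'I_N)%type => z \in I) | injectiveb f]|); last first.
  rewrite card_inj_ffuns_on card_ord -ffactnn; congr (_ ^_ _).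
  by transitivity #|I|; [apply: eq_card | exact: cI].
apply: eq_card => g; rewrite !inE.
apply/idP/idP.
  move=> /eqP ig; apply/andP; split.
    by apply/ffun_onP => j; rewrite -ig img_in.
  apply/injectiveP.
  have /imset_injP gi : #|g @: [set: 'I_N]| == #|[set: 'I_N]|.
    by rewrite -/(img g) ig cI cardsT card_ord.
  by move=> a b; apply: gi; rewrite inE.
case/andP => /ffun_onP gI /injectiveP gi.
rewrite eqEcard; apply/andP; split.
  by apply/subsetP => x /imsetP [j _ ->]; apply: gI.
by rewrite /img card_imset // cardsT card_ord cI.
Qed.

Lemma count_trees : N`!%:R * \det (padm K (Mesh src tgt eK path))
   = N`!%:R * (num_spanning_trees src tgt S0)%:R.
Proof.
have -> : padm K (Mesh src tgt eK path) = \matrix_(j, k) \sum_sg W sg j * W sg k.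
  apply/matrixP => j k; rewrite !mxE big_sumType /=.
  case: (boolP (j \in K)) => jK; case: (boolP (k \in K)) => kK /=.
  - by rewrite [X in _ = _ + X]big1 ?addr0 // => i _; rewrite mulr0.
  - have /negbTE -> : j != k by apply: contraNneq kK => <-.
    by rewrite !big1 ?addr0 // => ? _; rewrite ?mulr0 ?mul0r.
  - have /negbTE -> : j != k by apply: contraNneq jK => ->.
    by rewrite !big1 ?addr0 // => ? _; rewrite ?mulr0 ?mul0r.
  - rewrite big1 ?add0r; last by move=> ? _; rewrite mul0r.
    rewrite (bigD1 j) //= eqxx mul1r big1 ?addr0 //.
    by move=> i /negbTE ij; rewrite ij mul0r.
rewrite CB_half CB_sym.
transitivity (\sum_(g : {ffun 'I_N -> (E + 'I_N)%type}) \sum_(T in trees) ((img g == ITset T)%:R : int)).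
  apply: eq_bigr => g _; rewrite -det_sq expr2; congr (_ * _).
rewrite exchange_big /=.
transitivity (\sum_(T in trees) (N`!%:R : int)).
  apply: eq_bigr => T Tt; rewrite -(card_img_eq (IT_card Tt)) -sumr_const.
  rewrite [RHS]big_mkcond /=; apply: eq_bigr => g _; by rewrite inE; case: (_ == _).
by rewrite sumr_const /num_spanning_trees -/trees mulr_natr.
Qed.


Lemma det_padm : \det (padm K (Mesh src tgt eK path)) = (num_spanning_trees src tgt S0)%:R.
Proof.
apply: (@mulfI _ (N`!%:R)); last exact: count_trees.
by rewrite pnatr_eq0 -lt0n fact_gt0.
Qed.

End Core.

Unset Implicit Arguments. Set Strict Implicit.

Theorem lemma3p1 (V E : finType) (src tgt : E -> V)
  (T0 : {set E}) (N : nat) (enumE : 'I_N -> E) (path : E -> seq (E * V)) :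
  connectedP src tgt [set: E] ->
  spanning_tree src tgt T0 ->
  injective enumE ->
  (forall e : E, e \notin T0 <-> exists i : 'I_N, enumE i = e) ->
  (forall i : 'I_N, src (enumE i) != tgt (enumE i) ->
     simple_path src tgt T0 (tgt (enumE i)) (src (enumE i)) (path (enumE i))) ->
  char_poly (Mesh src tgt enumE path) =
    'X^N + \sum_(1 <= j < N.+1)
             ((-1) ^+ j * ((bcoef src tgt T0 enumE j)%:R)%:P * 'X^(N - j)).
Proof.
move=> _ T0t inj cov Hp.
rewrite char_poly_minors.
rewrite (partition_big (fun P : {set 'I_N} => (inord #|P| : 'I_N.+1)) xpredT) //=.
rewrite big_ord_recl big_add1 big_mkord /=.
congr (_ + _).
  rewrite (big_pred1 set0); last first.
    move=> P /=; rewrite -(inj_eq val_inj) /= inordK; last by rewrite ltnS; have := max_card P; rewrite card_ord.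
    by rewrite cards_eq0.
  rewrite cards0 subn0 expr0 mul1r.
  have -> : padm set0 (Mesh src tgt enumE path) = 1%:M.
    by apply/matrixP => i j; rewrite !mxE inE.
  by rewrite det1 mulr1.
apply: eq_bigr => j _.
have cardP : forall P : {set 'I_N}, (inord #|P| == lift ord0 j :> 'I_N.+1) = (#|P| == j.+1).
  move=> P; rewrite -(inj_eq val_inj) /= inordK //.
  by rewrite ltnS; have := max_card P; rewrite card_ord.
rewrite (eq_bigl (fun P : {set 'I_N} => #|P| == j.+1)); last by move=> P; rewrite cardP.
rewrite /bcoef natr_sum rmorph_sum mulr_sumr mulr_suml.
apply: eq_bigr => P /eqP cP.
rewrite cP (det_padm T0t inj cov Hp) /S0.
by rewrite [LHS]mulrC.
Qed.
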